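(* Let $G=(V,D,B)$ be a simple mixed graph and $\Sigma$ a positive definite $V\times V$ matrix. Then $\Sigma\in\mathcal{M}_G$ if and only if $\mathcal{R}(\Sigma)\in\mathcal{M}_G$, where $\mathcal{R}(\Sigma)_{ij}=\Sigma_{ij}/\sqrt{\Sigma_{ii}\Sigma_{jj}}$.
   Context: A mixed graph with finite vertex set $V$ is a triple $G=(V,D,B)$ with $D$ a set of ordered pairs $(i,j)$, $i\ne j$ (directed edges) and $B$ a set of unordered pairs $\{i,j\}$, $i\ne j$ (bidirected edges); it is simple if any two distinct nodes are joined by at most one edge. $\mathbb{R}^D_{\mathrm{reg}}$ is the set of real $V\times V$ matrices $\Lambda$ with $\lambda_{ij}=0$ for $(i,j)\notin D$ and $I-\Lambda$ invertible; $\mathit{PD}(B)$ is the set of positive definite symmetric matrices $\Omega$ with $\omega_{ij}=0$ for $i\ne j$, $\{i,j\}\notin B$. $\mathcal{M}_G=\{(I-\Lambda)^{-T}\Omega(I-\Lambda)^{-1}:\Lambda\in\mathbb{R}^D_{\mathrm{reg}},\Omega\in\mathit{PD}(B)\}$. *)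

(* Defs.v *)
(* Vertex set V = 'I_n; real field: an arbitrary rcfType
   (the statement is purely algebraic; rcfType provides square roots). *)
From mathcomp Require Import all_boot all_order all_algebra.
Set Implicit Arguments. Unset Strict Implicit. Unset Printing Implicit Defensive.
Import Order.TTheory GRing.Theory Num.Theory.
Local Open Scope ring_scope.

(* A mixed graph on vertices 'I_n: D i j means directed edge i -> j,
   B i j means bidirected edge {i,j}. *)
Record mixed_graph (n : nat) := MixedGraph {
  dir_edge : rel 'I_n;
  bidir_edge : rel 'I_n }.

Definition wf_mixed_graph n (G : mixed_graph n) : Prop :=
  (forall i, ~~ dir_edge G i i) /\ (forall i, ~~ bidir_edge G i i) /\
  (forall i j, bidir_edge G i j = bidir_edge G j i).

Definition simple_mixed_graph n (G : mixed_graph n) : Prop :=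
  forall i j : 'I_n, i != j ->
    ((dir_edge G i j : nat) + (dir_edge G j i : nat) + (bidir_edge G i j : nat) <= 1)%N.

Definition posdef (R : realFieldType) n (S : 'M[R]_n) : Prop :=
  S^T = S /\ forall x : 'cV[R]_n, x != 0 -> 0 < (x^T *m S *m x) 0 0.

Definition RD_reg (R : realFieldType) n (G : mixed_graph n) (L : 'M[R]_n) : Prop :=
  (forall i j, ~~ dir_edge G i j -> L i j = 0) /\ (1%:M - L \in unitmx).

Definition PD_B (R : realFieldType) n (G : mixed_graph n) (O : 'M[R]_n) : Prop :=
  posdef O /\ (forall i j, i != j -> ~~ bidir_edge G i j -> O i j = 0).

Definition model (R : realFieldType) n (G : mixed_graph n) (S : 'M[R]_n) : Prop :=
  exists L O, RD_reg G L /\ PD_B G O /\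
    S = (invmx (1%:M - L))^T *m O *m invmx (1%:M - L).

Definition corr (R : rcfType) n (S : 'M[R]_n) : 'M[R]_n :=
  \matrix_(i, j) (S i j / Num.sqrt (S i i * S j j)).

(* Main.v *)
Require Import Defs.
From mathcomp Require Import all_boot all_order all_algebra.
From mathcomp Require Import ring.
Set Implicit Arguments. Unset Strict Implicit. Unset Printing Implicit Defensive.
Import Order.TTheory GRing.Theory Num.Theory.
Local Open Scope ring_scope.

Lemma diag_inv (R : fieldType) n (d : 'rV[R]_n) :
  (forall i, d 0 i != 0) ->
  diag_mx d *m diag_mx (\row_i (d 0 i)^-1) = 1%:M /\
  diag_mx (\row_i (d 0 i)^-1) *m diag_mx d = 1%:M.
Proof.
move=> hd; rewrite !mulmx_diag -!diag_const_mx; split; congr diag_mx;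
  apply/rowP => j; rewrite !mxE ?mulfV ?mulVf //.
Qed.

Lemma invmx_uniq (R : comUnitRingType) n (A B : 'M[R]_n) :
  A *m B = 1%:M -> invmx A = B.
Proof.
move=> h; have [uA _] := mulmx1_unit h.
by rewrite -[invmx A]mulmx1 -h mulmxA mulVmx // mul1mx.
Qed.

Lemma scale_model (R : realFieldType) n (G : mixed_graph n) (d : 'rV[R]_n)
  (S : 'M[R]_n) : (forall i, d 0 i != 0) ->
  model G S -> model G (diag_mx d *m S *m diag_mx d).
Proof.
move=> hd [L [O [[hL uL] [[[OT Opd] hO] ->]]]].
set D := diag_mx d; set E := diag_mx (\row_i (d 0 i)^-1).
have [DE ED] := diag_inv hd.
set M := invmx (1%:M - L).
exists (E *m L *m D), (D *m O *m D).
have key : (1%:M - E *m L *m D) *m (E *m M *m D) = 1%:M.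
  have -> : 1%:M - E *m L *m D = E *m (1%:M - L) *m D.
    by rewrite mulmxBr mulmxBl mulmx1 ED.
  rewrite !mulmxA -[E *m (1%:M - L) *m D *m E]mulmxA DE mulmx1.
  by rewrite -[E *m (1%:M - L) *m M]mulmxA mulmxV // mulmx1 ED.
have [u1 _] := mulmx1_unit key.
split; [split|split; [split; [split|]|]].
- move=> i j hij; rewrite mul_mx_diag mul_diag_mx !mxE hL //.
  by rewrite mulr0 mul0r.
- exact: u1.
- by rewrite !trmx_mul tr_diag_mx OT mulmxA.
- move=> x hx; have -> : x^T *m (D *m O *m D) *m x = (D *m x)^T *m O *m (D *m x).
    by rewrite trmx_mul tr_diag_mx !mulmxA.
  apply: Opd; apply: contra hx => /eqP h.
  by rewrite -[x]mul1mx -ED -mulmxA h mulmx0.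
- move=> i j hij hb; rewrite mul_mx_diag mul_diag_mx !mxE hO //.
  by rewrite mulr0 mul0r.
- rewrite (invmx_uniq key) !trmx_mul !tr_diag_mx.
  idtac.
  rewrite !mulmxA -[D *m M^T *m E *m D]mulmxA ED mulmx1.
  rewrite -[D *m M^T *m O *m D *m E]mulmxA DE mulmx1.
  by rewrite -/D.
Qed.

Lemma posdef_diag (R : realFieldType) n (S : 'M[R]_n) i :
  posdef S -> 0 < S i i.
Proof.
move=> [_ hS]; have := hS (delta_mx i 0).
rewrite trmx_delta -rowE -colE !mxE => -> //.
by apply/negP => /eqP/matrixP/(_ i 0); rewrite !mxE !eqxx /= => /eqP; rewrite oner_eq0.
Qed.

Theorem lemma3 (R : rcfType) (n : nat) (G : mixed_graph n) (S : 'M[R]_n) :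
  wf_mixed_graph G -> simple_mixed_graph G -> posdef S ->
  (model G S <-> model G (corr S)).
Proof.
move=> _ _ hS.
have pos i : 0 < S i i := posdef_diag i hS.
have sq i : 0 < Num.sqrt (S i i) by rewrite sqrtr_gt0.
have sqn i : Num.sqrt (S i i) != 0 by rewrite gt_eqF.
have E1 : corr S = diag_mx (\row_i (Num.sqrt (S i i))^-1) *m S
                   *m diag_mx (\row_i (Num.sqrt (S i i))^-1).
  apply/matrixP => i j; rewrite mul_mx_diag mul_diag_mx !mxE.
  rewrite sqrtrM ?(ltW (pos i)) // invfM; field; apply/andP; split; exact: sqn.
have E2 : S = diag_mx (\row_i (Num.sqrt (S i i))) *m corr S
                   *m diag_mx (\row_i (Num.sqrt (S i i))).
  apply/matrixP => i j; rewrite mul_mx_diag mul_diag_mx !mxE.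
  rewrite sqrtrM ?(ltW (pos i)) //; field; apply/andP; split; exact: sqn.
split => h.
- rewrite E1; apply: scale_model => // i; rewrite mxE invr_eq0; exact: sqn.
- rewrite E2; apply: scale_model => // i; rewrite mxE; exact: sqn.
Qed.
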